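(* Let $G$ be a finite simple graph, $S\subseteq V(G)$, and $t\ge 3$. Suppose $G\setminus S$ is isomorphic to the graph $G_{n,t}$ for some $n\ne 3,5$ with $t>\lceil n/2\rceil$. Then $\mathrm{CF}_t(\mathrm{Cl}(G,S,t))$ is not shellable.
   Context: $G_{n,t}$: start with the complete graph $K_n$ on $y_1,\dots,y_n$; for each $1\le i\le n$ add $t-2$ new vertices $x_{i,1},\dots,x_{i,t-2}$ and make $\{y_i,y_{i+1},x_{i,1},\dots,x_{i,t-2}\}$ a clique (indices of $y$ modulo $n$); there are no other edges. $\mathrm{Cl}(G,S,t)$ is the graph obtained from $G$ by attaching, simultaneously for each $v\in S$, a clique $K_v$ with $v\in V(K_v)$ and $|V(K_v)|\ge t$, whose other vertices are new, with $K_u,K_v$ vertex-disjoint for $u\ne v$. $G\setminus S$ is the induced subgraph on $V(G)\setminus S$. $\mathrm{CF}_t(\cdot)$ is the simplicial complex on the vertex set whose faces are the vertex subsets inducing no $t$-clique. A simplicial complex is shellable if its facets admit an order $F_1,\dots,F_s$ such that for all $i<j$ there exist $v\in F_j\setminus F_i$ and $\ell<j$ with $F_j\setminus F_\ell=\{v\}$. *)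

(* Defs.v *)
From mathcomp Require Import all_boot.
Set Implicit Arguments. Unset Strict Implicit. Unset Printing Implicit Defensive.


(* vertices: y_i  = inl i  (i < n),
             x_{i,a} = inr (i, a)  (i < n, a < t-2)                       *)
Definition Gnt_vert (n t : nat) : finType := ('I_n + ('I_n * 'I_(t - 2)))%type.

(* y_i ~ y_j iff i <> j (complete graph K_n);
   {y_i, y_{i+1 mod n}, x_{i,1..t-2}} is a clique; no other edges. *)
Definition Gnt_adj (n t : nat) : rel (Gnt_vert n t) :=
  fun u w =>
  match u, w with
  | inl i, inl j => i != j
  | inl i, inr (j, _) => ((i : nat) == j) || ((i : nat) == j.+1 %% n)
  | inr (j, _), inl i => ((i : nat) == j) || ((i : nat) == j.+1 %% n)
  | inr (i, a), inr (j, b) => (i == j) && (a != b)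
  end.

Definition induced_iso_Gnt (T : finType) (e : rel T) (S : {set T}) (n t : nat) :=
  exists f : Gnt_vert n t -> T,
    [/\ injective f,
        (forall x, x \notin S <-> exists a, f a = x) &
        (forall a b, e (f a) (f b) = Gnt_adj a b)].

(* For each v in S we add m v new vertices, forming with v a clique K_v of
   size (m v).+1; vertices outside S get no new vertices. *)
Definition newcount (T : finType) (S : {set T}) (m : T -> nat) (v : T) : nat :=
  if v \in S then m v else 0.

Definition Cl_vert (T : finType) (S : {set T}) (m : T -> nat) : finType :=
  (T + {v : T & 'I_(newcount S m v)})%type.

Definition Cl_adj (T : finType) (e : rel T) (S : {set T}) (m : T -> nat)
  : rel (Cl_vert S m) :=
  fun u w =>
  match u, w with
  | inl a, inl b => e a b
  | inl a, inr q => a == tag q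
  | inr p, inl a => a == tag p
  | inr p, inr q => (tag p == tag q) && (p != q)
  end.

Definition is_clique (U : finType) (r : rel U) (K : {set U}) : Prop :=
  {in K &, forall x y, x != y -> r x y}.

Definition CF_face (U : finType) (r : rel U) (t : nat) (F : {set U}) : Prop :=
  ~ exists K : {set U}, [/\ K \subset F, #|K| = t & is_clique r K].

Definition facet (U : finType) (face : {set U} -> Prop) (F : {set U}) : Prop :=
  face F /\ forall G : {set U}, face G -> F \subset G -> G = F.

Definition shellable (U : finType) (face : {set U} -> Prop) : Prop :=
  exists s : seq {set U},
    [/\ uniq s,
        (forall F, F \in s <-> facet face F) &
        (forall i j, i < j -> j < size s ->
           exists v, v \in nth set0 s j :\: nth set0 s i /\
             exists l, l < j /\ nth set0 s j :\: nth set0 s l = [set v])].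
Arguments Cl_adj {T} e S m.
Arguments CF_face {U} r t F.

(* Main.v *)
Require Import Defs.
From mathcomp Require Import all_boot zify.
Set Implicit Arguments. Unset Strict Implicit. Unset Printing Implicit Defensive.

Ltac nclr := repeat match goal with H : _ |- _ =>
  lazymatch type of H with
  | is_true (leq _ _) => fail
  | @eq _ _ _ => fail
  | nat => fail
  | ~ _ => fail
  | is_true (negb (@eq_op _ _ _)) => fail
  | _ => clear H
  end end.
Ltac nlia := nclr; lia.

Section Main.
Variables (T : finType) (e : rel T) (S : {set T}) (t n : nat) (m : T -> nat).
Hypothesis e_sym : symmetric e.
Hypothesis t_ge3 : 3 <= t.
Hypothesis n_ge3 : 3 <= n.
Hypothesis m_ge : forall v, v \in S -> t <= (m v).+1.
Variable f : Gnt_vert n t -> T.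
Hypothesis f_inj : injective f.
Hypothesis f_img : forall x, x \notin S <-> exists a, f a = x.
Hypothesis f_adj : forall a b, e (f a) (f b) = Gnt_adj a b.

Local Notation V := (Cl_vert S m).
Local Notation adj := (Cl_adj e S m).
Local Notation face := (CF_face adj t).

Lemma n_gt0 : 0 < n. Proof. lia. Qed.

Definition yv (q : nat) : V := inl (f (inl (Ordinal (ltn_pmod q n_gt0)))).
Definition xv (p : 'I_n * 'I_(t-2)) : V := inl (f (inr p)).
Definition Xs : {set V} := [set xv p | p in predT].
Definition sig : {set V} :=
  [set u : V | if u is inr q then val (tagged q) < t.-1 else false].

Definition Q := {x : T & 'I_(newcount S m x)}.
Definition inrV (q : Q) : V := inr q.

Lemma not_face (H K : {set V}) :
  K \subset H -> #|K| = t -> is_clique adj K -> ~ face H.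
Proof. by move=> sKH cK clK; apply; exists K. Qed.

Lemma fS (a : Gnt_vert n t) : f a \notin S.
Proof. by apply/f_img; exists a. Qed.

Lemma tagS (q : {v : T & 'I_(newcount S m v)}) : tag q \in S.
Proof.
case: q => v o /=; move: o; rewrite /newcount; case: ifP => // _ [] //.
Qed.

Lemma qeq (q q' : {v : T & 'I_(newcount S m v)}) :
  tag q = tag q' -> val (tagged q) = val (tagged q') -> q = q'.
Proof.
case: q => v o; case: q' => v' o' /= E; subst v' => E.
by congr existT; apply: val_inj.
Qed.

Definition hv (u : V) : nat := if u is inr q then val (tagged q) else 0.

(* clique of size t made of z and t-1 new vertices of K_v *)
Lemma sv_clique (v : T) (z : V) : v \in S ->
  (forall q : Q, tag q = v -> val (tagged q) < t.-1 -> z != inrV q) ->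
  (forall q : Q, tag q = v -> val (tagged q) < t.-1 -> adj z (inrV q) && adj (inrV q) z) ->
  exists K : {set V}, [/\ #|K| = t, is_clique adj K & K \subset z |: sig].
Proof.
move=> vS zn zadj.
have H : t.-1 <= newcount S m v by rewrite /newcount vS; have := m_ge vS; lia.
pose emb (o : 'I_t.-1) : V := inr (existT _ v (widen_ord H o)).
have emb_inj : injective emb.
  move=> o o' E; have := congr1 hv E; rewrite /hv /= => E'; exact: val_inj.
exists (z |: [set emb o | o in predT]); split.
- rewrite cardsU1 card_imset // card_ord.
  have -> : z \notin [set emb o | o in predT].
    apply/imsetP => -[o _ E].
    by move: (zn (existT _ v (widen_ord H o)) erefl (ltn_ord o)); rewrite /inrV -/(emb o) -E eqxx.
  lia.
- move=> x y /setU1P [->|/imsetP [o _ ->]] /setU1P [->|/imsetP [o' _ ->]];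
    rewrite ?eqxx // => ne.
  + by have /andP [] := zadj (existT _ v (widen_ord H o')) erefl (ltn_ord o').
  + by have /andP [] := zadj (existT _ v (widen_ord H o)) erefl (ltn_ord o).
  + by rewrite /= eqxx ne.
- apply/subsetP => x /setU1P [->|/imsetP [o _ ->]]; first by rewrite setU11.
  by rewrite setU1r // inE /= ltn_ord.
Qed.


Lemma yv_ord (i : 'I_n) : yv i = inl (f (inl i)).
Proof. by rewrite /yv; congr (inl (f (inl _))); apply: val_inj; rewrite /= modn_small. Qed.

Lemma struct_face (H : {set V}) : face H -> sig \subset H ->
  forall w, w \in H -> [\/ w \in sig, w \in Xs | exists q, w = yv q].
Proof.
move=> fH sH w wH; case: w wH => [x|q] wH.
- case xS: (x \in S).
  + have [||K [cK clK sK]] := @sv_clique x (inl x) xS.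
    * by [].
    * by move=> q E _; rewrite /inrV /= E eqxx.
    * exfalso; apply: fH; exists K; split=> //.
      apply: (subset_trans sK); apply/subsetP => y /setU1P [->|] //; exact: (subsetP sH).
  + have [a fa] : exists a, f a = x by apply/f_img; rewrite xS.
    subst x; clear xS; case: a wH => [i|p] wH.
    * by apply: Or33; exists i; rewrite yv_ord.
    * by apply: Or32; apply/imsetP; exists p.
- case qs: (val (tagged q) < t.-1); first by apply: Or31; rewrite inE /= qs.
  exfalso.
  have [||K [cK clK sK]] := @sv_clique (tag q) (inr q) (tagS q).
  + move=> q' E lt; apply/eqP => /(congr1 hv) E2.
    by move: E2 qs; rewrite /hv /inrV /= => ->; rewrite lt.
  + move=> q' E lt; rewrite /inrV /= E eqxx /=.
    apply/andP; split; apply/eqP => /(congr1 (fun r : Q => val (tagged r))) E2.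
    * by move: E2 qs => /= ->; rewrite lt.
    * by move: E2 qs => /= <-; rewrite lt.
  + apply: fH; exists K; split=> //.
    apply: (subset_trans sK); apply/subsetP => y /setU1P [->|] //; exact: (subsetP sH).
Qed.

Lemma clique_img (C0 : {set Gnt_vert n t}) :
  {in C0 &, forall g g', g != g' -> Gnt_adj g g'} ->
  is_clique adj [set (inl (f g) : V) | g in C0].
Proof.
move=> cl x y /imsetP [g gC ->] /imsetP [g' gC' ->] ne.
rewrite /= f_adj; apply: cl => //; apply: contra ne => /eqP -> //.
Qed.

Lemma inlf_inj : injective (fun g => (inl (f g) : V)).
Proof. by move=> g g' [] /f_inj. Qed.

Lemma no_consec (H : {set V}) (q : nat) : face H -> Xs \subset H ->
  yv q \in H -> yv q.+1 \in H -> False.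
Proof.
move=> fH sX y1 y2.
set j := Ordinal (ltn_pmod q n_gt0).
set j' := Ordinal (ltn_pmod q.+1 n_gt0).
have jj' : j != j'.
  apply/eqP => /(congr1 val) /= /esym /eqP.
  rewrite -addn1 -[X in _ == X %[mod n]]addn0 eqn_modDl mod0n modn_small; last lia.
  by [].
have jS : (j' : nat) = (j : nat).+1 %% n by rewrite /= -[(q %% n).+1]addn1 modnDml addn1.
have y1' : inl (f (inl j)) \in H by [].
have y2' : inl (f (inl j')) \in H by [].
clearbody j j'; clear y1 y2.
pose B : {set Gnt_vert n t} := [set inr (j, b) | b in predT].
pose C0 : {set Gnt_vert n t} := inl j |: (inl j' |: B).
apply: fH; exists [set (inl (f g) : V) | g in C0]; split.
- apply/subsetP => x /imsetP [g /setU1P [->|/setU1P [->|/imsetP [b _ ->]]] ->] //.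
  exact: (subsetP sX) (imset_f _ _).
- rewrite card_imset; last exact: inlf_inj.
  rewrite cardsU1 cardsU1 card_imset; last by move=> b b' [].
  rewrite !in_setU1.
  have -> : ((inl j' : Gnt_vert n t) \in B) = false by apply/imsetP => -[].
  have -> : ((inl j : Gnt_vert n t) \in B) = false by apply/imsetP => -[].
  have -> : (inl j == inl j' :> Gnt_vert n t) = false.
    by apply/negbTE; apply: contra jj' => /eqP E; apply/eqP; congruence.
  rewrite /= -[#|predT|]/#|'I_(t-2)| card_ord; lia.
- apply: clique_img => g g' /setU1P [->|/setU1P [->|/imsetP [b _ ->]]]
    /setU1P [->|/setU1P [->|/imsetP [b' _ ->]]]; rewrite ?eqxx //= ?eqxx //.
  all: try by rewrite jS eqxx orbT.
  by move=> ne; apply: contra ne => /eqP ->.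
Qed.


Lemma yv_eq x y : (yv x == yv y) = (x %% n == y %% n).
Proof.
apply/eqP/eqP => [[/f_inj [->]] //|E].
by rewrite /yv; congr (inl (f (inl _))); apply: val_inj; rewrite /= E.
Qed.

Lemma yv_modeq x y : x %% n = y %% n -> yv x = yv y.
Proof. by move=> E; apply/eqP; rewrite yv_eq E. Qed.

Lemma modoff c A B : A %% n = B %% n -> (c + A) %% n = (c + B) %% n.
Proof. by move=> E; rewrite -modnDmr E modnDmr. Qed.

Lemma modshift A B : A = B + n -> A %% n = B %% n.
Proof. by move=> ->; rewrite modnDr. Qed.

Lemma modoff_inv c A B : A < n.*2 -> B < n.*2 -> (c + A) %% n = (c + B) %% n ->
  [\/ A = B, A = B + n | B = A + n].
Proof.
move=> hA hB /eqP; rewrite eqn_modDl => /eqP.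
have mA : A %% n = if A < n then A else A - n.
  case: ltnP => h; first by rewrite modn_small.
  by rewrite (@modshift A (A - n)) ?modn_small; lia.
have mB : B %% n = if B < n then B else B - n.
  case: ltnP => h; first by rewrite modn_small.
  by rewrite (@modshift B (B - n)) ?modn_small; lia.
rewrite mA mB; case: ltnP => h1; case: ltnP => h2 E.
- by apply: Or31.
- by apply: Or33; lia.
- by apply: Or32; lia.
- by apply: Or31; lia.
Qed.

Lemma yv_norm c q : exists2 d, d < n & yv q = yv (c + d).
Proof.
exists ((q %% n + (n - c %% n)) %% n); first exact: ltn_pmod n_gt0.
apply: yv_modeq; rewrite modnDmr -modnDml.
have lc : c %% n < n := ltn_pmod c n_gt0.
rewrite (_ : c %% n + (q %% n + (n - c %% n)) = q %% n + n); last by lia.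
by rewrite modnDr modn_mod.
Qed.

Definition k := n./2.
Hypothesis t_gt : (n.+1)./2 < t.

Lemma k_lt_t : k < t. Proof. rewrite /k; lia. Qed.
Lemma n_k : k.*2 <= n <= k.*2.+1. Proof. rewrite /k; lia. Qed.

Definition J (a : nat) : {set V} := [set yv (a + 2 * val i) | i : 'I_k].
Definition F (a : nat) : {set V} := sig :|: Xs :|: J a.

Lemma inJ a x i : i < k -> (a + 2 * i) %% n = x %% n -> yv x \in J a.
Proof.
move=> ik E; apply/imsetP; exists (Ordinal ik) => //; apply: yv_modeq; by rewrite E.
Qed.

Lemma outJ a x : yv x \in J a -> exists2 i, i < k & (a + 2 * i) %% n = x %% n.
Proof. by case/imsetP => i _ /eqP; rewrite eq_sym yv_eq => /eqP E; exists i. Qed.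

Lemma yv_sig x : yv x \notin sig. Proof. by rewrite inE. Qed.
Lemma yv_Xs x : yv x \notin Xs.
Proof. by apply/imsetP => -[p _ [] /f_inj]. Qed.

Lemma J_mod a : J (a %% n) = J a.
Proof.
apply/setP => w; apply/imsetP/imsetP => -[i _ ->]; exists i => //;
  apply: yv_modeq; by rewrite modnDml.
Qed.

Lemma F_mod a : F (a %% n) = F a.
Proof. by rewrite /F J_mod. Qed.

Lemma J_noconsec a q : yv q \in J a -> yv q.+1 \in J a -> False.
Proof.
move=> /outJ [i ik E1] /outJ [i' ik' E2].
have : (a + 2 * i') %% n = (a + (2 * i).+1) %% n.
  by rewrite E2 -addn1 -modnDml -E1 modnDml addn1 addnS.
have := n_k => nk.
move/modoff_inv => -[]; try lia.
Qed.


Lemma card_bound (K : {set V}) (h : V -> nat) N :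
  {in K &, injective h} -> (forall u, u \in K -> h u < N) -> #|K| <= N.
Proof.
move=> inj hb; rewrite cardE -(size_map h) -(size_iota 0 N); apply: uniq_leq_size.
- rewrite map_inj_in_uniq ?enum_uniq // => x y; rewrite !mem_enum; exact: inj.
- move=> y /mapP [x xK ->]; rewrite mem_iota; rewrite mem_enum in xK.
  have := hb x xK; lia.
Qed.

Definition finv (u : V) : option (Gnt_vert n t) :=
  if u is inl x then [pick g | f g == x] else None.

Lemma finvE g : finv (inl (f g)) = Some g.
Proof.
rewrite /finv; case: pickP => [g' /eqP /f_inj -> //|H].
by have := H g; rewrite eqxx.
Qed.

Lemma inF_inl a x : (inl x : V) \in F a ->
  (exists p, (inl x : V) = xv p) \/ (exists2 y, (inl x : V) = yv y & (inl x : V) \in J a).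
Proof.
rewrite !inE => /orP [/orP [//|/imsetP [p _ ->]]|xJ]; first by left; exists p.
right; case/imsetP: (xJ) => i _ E; by exists (a + 2 * val i).
Qed.

Lemma inF_inr a q : inrV q \in F a -> val (tagged q) < t.-1.
Proof.
rewrite !inE => /orP [/orP [//|/imsetP [p _ //]]|/imsetP [i _ //]].
Qed.

Lemma faceF a : face (F a).
Proof.
move=> [K [sK cK clK]].
have inK u : u \in K -> u \in F a by move=> uK; exact: (subsetP sK).
case: (boolP [exists q : Q, inrV q \in K]) => [/existsP [q0 q0K]|noinr].
  have allq : forall u, u \in K -> exists q, [/\ u = inrV q, tag q = tag q0 & val (tagged q) < t.-1].
    move=> [x|q] uK.
    - exfalso.
      have ne : (inl x : V) != inrV q0 by [].
      have := clK _ _ q0K uK; rewrite eq_sym => /(_ ne) /= /eqP xq.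
      case: (inF_inl (inK _ uK)) => [[p [E]]|[y [E] _]];
        by move: (tagS q0); rewrite -xq E (negbTE (fS _)).
    - exists q; split => //; last exact: inF_inr (inK _ uK).
      case: (eqVneq q q0) => [->//|ne].
      have ne' : inrV q0 != inr q by apply: contra ne => /eqP [->].
      by have := clK _ _ q0K uK ne' => /= /andP [/eqP].
  have : #|K| <= t.-1.
    apply: (card_bound (h := hv)).
    + move=> u1 u2 /allq [q1 [-> E1 _]] /allq [q2 [-> E2 _]] /= E.
      by rewrite (@qeq q1 q2) // E1 E2.
    + by move=> u /allq [q [-> _ lt]].
  lia.
have noinr' : forall q : Q, inrV q \notin K.
  by move=> q; apply: contra noinr => qK; apply/existsP; exists q.
case: (boolP [exists p, xv p \in K]) => [/existsP [[j b] xK]|nox].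
  pose h2 (u : V) := if finv u is Some (inr (_, b')) then (val b').+1 else 0.
  have desc : forall u, u \in K ->
     (exists2 b' : 'I_(t-2), u = xv (j, b') & h2 u = b'.+1) \/
     (exists2 i : 'I_n, u = yv i & [/\ h2 u = 0, u \in J a & ((i : nat) == j) || ((i : nat) == j.+1 %% n)]).
    move=> [x|q] uK; last by rewrite (negbTE (noinr' q)) in uK.
    case: (inF_inl (inK _ uK)) => [[[j' b'] E]|[y E yJ]].
    - have Ex : x = f (inr (j', b')) by case: E.
      subst x; left; exists b'; last by rewrite /h2 finvE.
      case: (eqVneq (j', b') (j, b)) => [[-> ->]//|ne].
      have ne' : xv (j, b) != inl (f (inr (j', b'))).
        by apply: contra ne => /eqP [] /f_inj [-> ->].
      have := clK _ _ xK uK ne'; rewrite /= f_adj /= => /andP [/eqP E2 _].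
      by rewrite /xv E2.
    - have Ex : x = f (inl (Ordinal (ltn_pmod y n_gt0))) by case: E.
      subst x; right; exists (Ordinal (ltn_pmod y n_gt0)); first by rewrite yv_ord.
      split; first by rewrite /h2 finvE.
      + exact: yJ.
      + have ne' : xv (j, b) != inl (f (inl (Ordinal (ltn_pmod y n_gt0)))).
          by apply/eqP => -[] /f_inj.
        by have := clK _ _ xK uK ne'; rewrite /= f_adj /=.
  have : #|K| <= t.-1.
    apply: (card_bound (h := h2)).
    + move=> u1 u2 /desc [[b1 -> h1]|[i1 -> [h1 J1 c1]]] /desc [[b2 -> h2']|[i2 -> [h2' J2 c2]]];
        rewrite ?h1 ?h2' // => E.
      * by rewrite (_ : b1 = b2) //; apply: val_inj; case: E.
      * case: (eqVneq i1 i2) => [->//|ne]; exfalso.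
        have [[E1 E2]|[E1 E2]] : ((i1 : nat) = j /\ (i2 : nat) = j.+1 %% n) \/ ((i2 : nat) = j /\ (i1 : nat) = j.+1 %% n).
          have vne : (i1 : nat) <> i2 by move=> E'; move/eqP: ne; apply; apply: val_inj.
          case/orP: c1 => /eqP e1; case/orP: c2 => /eqP e2;
            [exfalso; lia | by left | by right | exfalso; lia].
        - apply: (@J_noconsec a i1) => //; rewrite (@yv_modeq i1.+1 i2) // E2 E1 modn_mod.
          by rewrite -[(j.+1 %% n)]modn_mod.
        - apply: (@J_noconsec a i2) => //; rewrite (@yv_modeq i2.+1 i1) // E2 E1 modn_mod.
          by rewrite -[(j.+1 %% n)]modn_mod.
    + move=> u /desc [[b' _ ->]|[i _ [-> _ _]]]; last lia.
      have := ltn_ord b'; lia.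
  lia.
have sKJ : K \subset J a.
  apply/subsetP => -[x|q] uK; last by rewrite (negbTE (noinr' q)) in uK.
  case: (inF_inl (inK _ uK)) => [[p E]|[y E yJ] //].
  by move: nox => /existsP; case; exists p; rewrite -E.
have : #|K| <= k.
  apply: (leq_trans (subset_leq_card sKJ)).
  apply: (leq_trans (leq_imset_card _ _)); by rewrite card_ord.
have := k_lt_t; lia.
Qed.


Lemma yvc_eq c d1 d2 : d1 = d2 + n -> yv (c + d1) = yv (c + d2).
Proof. by move=> E; apply: yv_modeq; apply: modoff; apply: modshift. Qed.

Lemma yvc_inj c d1 d2 : d1 < n -> d2 < n -> yv (c + d1) = yv (c + d2) -> d1 = d2.
Proof.
move=> h1 h2 /eqP; rewrite yv_eq => /eqP E.
have hA : d1 < n.*2 by lia.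
have hB : d2 < n.*2 by lia.
case: (modoff_inv hA hB E); lia.
Qed.

Lemma inJc c p d i : i < k -> (p + 2 * i = d \/ p + 2 * i = d + n \/ d = p + 2 * i + n) ->
  yv (c + d) \in J (c + p).
Proof.
move=> ik E; apply: (inJ ik); rewrite -addnA; apply: modoff.
by case: E => [->|[->|->]]; rewrite ?modnDr.
Qed.

Lemma yvc_inj2 c d1 d2 : d1 < n.*2 -> d2 < n.*2 -> yv (c + d1) = yv (c + d2) ->
  d1 = d2 \/ d1 = d2 + n \/ d2 = d1 + n.
Proof.
move=> h1 h2 /eqP; rewrite yv_eq => /eqP E.
case: (modoff_inv h1 h2 E); lia.
Qed.

Lemma outJc c p d : p < n -> d < n -> yv (c + d) \in J (c + p) ->
  exists2 i, i < k & [\/ p + 2 * i = d, p + 2 * i = d + n | d = p + 2 * i + n].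
Proof.
move=> hp hd /outJ [i ik E]; exists i => //.
have := n_k => nk.
rewrite -addnA in E.
have hA : p + 2 * i < n.*2 by lia.
have hB : d < n.*2 by lia.
by case: (modoff_inv hA hB E) => h; [apply: Or31 | apply: Or32 | apply: Or33].
Qed.

Lemma nc (H : {set V}) c d : face H -> Xs \subset H ->
  yv (c + d) \in H -> yv (c + d.+1) \in H -> False.
Proof. by move=> fH sX h1; rewrite addnS; apply: no_consec. Qed.

Lemma nbr a d : d < n -> yv (a + d) \notin J a ->
  (exists2 r, yv r \in J a & yv r.+1 = yv (a + d)) \/ yv (a + d).+1 \in J a.
Proof.
move=> dn dJ; have := n_k => nk.
have [j [Ej|Ej]] : exists j, d = 2 * j \/ d = (2 * j).+1 by exists d./2; lia.
- right; have jk : k <= j.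
    case: (ltnP j k) => // jk; by rewrite (inJ jk) ?Ej in dJ.
  have := @inJc a 0 0 0; rewrite !addn0 => h.
  rewrite (_ : (a + d).+1 = a + (0 + n)); last by lia.
  by rewrite (@yvc_eq a (0 + n) 0) ?addn0 //; apply: h => //; lia.
- left; exists (a + 2 * j); last by rewrite Ej addnS.
  apply: (inJ (i := j)) => //; lia.
Qed.

Lemma facetF a : facet face (F a).
Proof.
split; first exact: faceF.
move=> G fG sFG; apply/eqP; rewrite eqEsubset sFG andbT.
have sX : Xs \subset G.
  by apply/subsetP => x xX; apply: (subsetP sFG); rewrite /F !in_setU xX orbT.
have sS : sig \subset G.
  by apply/subsetP => x xX; apply: (subsetP sFG); rewrite /F !in_setU xX.
apply/subsetP => w wG.
case: (struct_face fG sS wG) => [ws|wX|[q Ew]]; last subst w.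
- by rewrite /F !in_setU ws.
- by rewrite /F !in_setU wX orbT.
- case: (yv_norm a q) => d dn E0; rewrite E0 in wG *.
  case: (boolP (yv (a + d) \in J a)) => [yJ|yJ]; first by rewrite /F in_setU yJ orbT.
  exfalso; case: (nbr dn yJ) => [[r rJ E]|h].
  + apply: (@no_consec G r fG sX); last by rewrite E.
    by apply: (subsetP sFG); rewrite /F in_setU rJ orbT.
  + by apply: (@no_consec G (a + d) fG sX) => //; apply: (subsetP sFG); rewrite /F in_setU h orbT.
Qed.


Variable s : seq {set V}.
Hypothesis s_uniq : uniq s.
Hypothesis s_mem : forall F0, F0 \in s <-> facet face F0.
Hypothesis s_sh : forall i j, i < j -> j < size s ->
  exists v, v \in nth set0 s j :\: nth set0 s i /\
    exists l, l < j /\ nth set0 s j :\: nth set0 s l = [set v].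

Lemma F_in a : F a \in s. Proof. by apply/s_mem; exact: facetF. Qed.

Lemma sig_F a : sig \subset F a.
Proof. by apply/subsetP => x xs; rewrite /F !in_setU xs. Qed.
Lemma Xs_F a : Xs \subset F a.
Proof. by apply/subsetP => x xs; rewrite /F !in_setU xs orbT. Qed.

Lemma exch a b : index (F b) s < index (F a) s ->
  exists l v q, [/\ l < index (F a) s, face (nth set0 s l),
     sig \subset nth set0 s l /\ Xs \subset nth set0 s l,
     (forall w, w \in J a -> w != v -> w \in nth set0 s l) &
     (v \in J a /\ v \notin J b) /\ (yv q \in nth set0 s l /\ yv q \notin J a)].
Proof.
move=> hij.
have js : index (F a) s < size s by rewrite index_mem F_in.
have [v [vin [l [lj Hl]]]] := s_sh hij js.
rewrite !nth_index ?F_in // in vin Hl.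
set H := nth set0 s l in Hl *.
have ls : l < size s by lia.
have Hfacet : facet face H by apply/s_mem; exact: mem_nth.
move: vin; rewrite inE => /andP [vFb vFa].
have vS : v \notin sig by apply: contra vFb; apply: (subsetP (sig_F b)).
have vX : v \notin Xs by apply: contra vFb; apply: (subsetP (Xs_F b)).
have vJa : v \in J a by move: vFa; rewrite /F !in_setU (negbTE vS) (negbTE vX).
have vJb : v \notin J b by apply: contra vFb => vJ; rewrite /F !in_setU vJ orbT.
have sub : forall w, w \in F a -> w != v -> w \in H.
  move=> w wF wv; apply/negPn/negP => wH.
  have : w \in F a :\: H by rewrite inE wH wF.
  by rewrite Hl inE (negbTE wv).
have sH : sig \subset H.
  apply/subsetP => w ws; apply: sub; first exact: (subsetP (sig_F a)).
  by apply: contra vS => /eqP <-.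
have xH : Xs \subset H.
  apply/subsetP => w ws; apply: sub; first exact: (subsetP (Xs_F a)).
  by apply: contra vX => /eqP <-.
have [u uH uF] : exists2 u, u \in H & u \notin F a.
  case: (boolP (H \subset F a)) => [HF|nHF]; last exact/subsetPn.
  have E : F a = H := Hfacet.2 (F a) (@faceF a) HF.
  have := index_uniq set0 ls s_uniq; rewrite -/H -E => h.
  by move: lj; rewrite h ltnn.
case: (struct_face Hfacet.1 sH uH) => [us|uX|[q Eu]].
- by rewrite (subsetP (sig_F a) _ us) in uF.
- by rewrite (subsetP (Xs_F a) _ uX) in uF.
exists l, v, q; split => //.
- exact: Hfacet.1.
- by move=> w wJ wv; apply: sub => //; rewrite /F in_setU wJ orbT.
- split => //; split; first by rewrite -Eu.
  by apply: contra uF; rewrite Eu => qJ; rewrite /F in_setU qJ orbT.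
Qed.


Lemma even_contra a b : ~~ odd n -> index (F b) s < index (F a) s -> False.
Proof.
move=> ev hab.
have [l [v [q [lj fH [sH xH] sub [[vJ vJb] [qH qJ]]]]]] := exch hab.
set H := nth set0 s l in fH sH xH sub qH.
have nk : n = k.*2.
  have := odd_double_half n; rewrite (negbTE ev) /k; nlia.
case/imsetP: vJ => iv _ Ev.
have ivk := ltn_ord iv.
case: (yv_norm a q) => d dn Eq; rewrite Eq in qH qJ.
have [j [Ej|Ej]] : exists j, d = 2 * j \/ d = (2 * j).+1 by exists d./2; nlia.
- move/negP: qJ; apply; apply: (@inJ a (a + d) j); [nlia| by rewrite Ej].
have a0 := @inJc a 0.
rewrite !addn0 in a0.
have m1 : yv (a + 2 * j) \in J a by apply: (@inJ a _ j) => //; nlia.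
have m2 : yv (a + (2 * j + 2)) \in J a.
  by case: (ltnP j.+1 k) => h; [apply: (a0 _ j.+1) | apply: (a0 _ 0)]; nlia.
case: (eqVneq (yv (a + 2 * j)) v) => [E1|ne1].
- have ne2 : yv (a + (2 * j + 2)) != v.
    rewrite -E1; apply/eqP => /yvc_inj2; nlia.
  apply: (@nc H a (2 * j).+1 fH xH); first by rewrite -Ej.
  by rewrite (_ : (2 * j).+1.+1 = 2 * j + 2); [apply: sub | nlia].
- apply: (@nc H a (2 * j) fH xH); last by rewrite -Ej.
  exact: sub.
Qed.


Lemma fin_contra a c l : l < index (F a) s -> index (F a) s <= index (F c) s ->
  face (nth set0 s l) -> sig \subset nth set0 s l -> Xs \subset nth set0 s l ->
  J c \subset nth set0 s l -> False.
Proof.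
move=> la ac fH sH xH jH.
have sFH : F c \subset nth set0 s l by rewrite /F !subUset sH xH jH.
have E := (facetF c).2 _ fH sFH.
have ls : l < size s.
  have := F_in a; rewrite -index_mem => h; exact: ltn_trans la h.
have := index_uniq set0 ls s_uniq; rewrite E; lia.
Qed.

Hypothesis n_ne : n != 3 /\ n != 5.

Lemma caseA c : odd n -> index (F (c + (n - 2))) s < index (F (c + 2)) s ->
  index (F (c + 2)) s <= index (F c) s -> False.
Proof.
move=> od hab hac.
have [l [v [q [lj fH [sH xH] sub [[vJ vJb] [qH qJ]]]]]] := exch hab.
apply: (fin_contra lj hac fH sH xH).
set H := nth set0 s l in fH sH xH sub qH *.
have nk : n = k.*2.+1.
  have := odd_double_half n; rewrite od /k; nlia.
have k3 : 3 <= k by case: n_ne => /eqP ? /eqP ?; nlia.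
case/imsetP: vJ => iv _ Ev.
have ivk := ltn_ord iv.
set dv := 2 + 2 * iv.
have Ev' : v = yv (c + dv) by rewrite Ev /dv addnA.
clear Ev; subst v.
case: (yv_norm c q) => du dun Eq; rewrite Eq in qH qJ.
have NC d : yv (c + d) \in H -> yv (c + d.+1) \in H -> False by apply: nc.
have du0 : du = 0.
  case: (posnP du) => // dupos; exfalso.
  have [j [Ej|Ej]] : exists j, du = 2 * j \/ du = (2 * j).+1 by exists du./2; nlia.
  - move/negP: qJ; apply; apply: (@inJc c 2 du j.-1); [nlia|left; nlia].
  have m2 : yv (c + (2 * j + 2)) \in J (c + 2) by apply: (@inJc c 2 _ j); [nlia|left; nlia].
  case: (eqVneq (yv (c + (2 * j + 2))) (yv (c + dv))) => [E|ne].
  + have dvj : dv = 2 * j + 2 by move/yvc_inj: E; nlia.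
    case: (posnP j) => [j0|jpos].
    * move/negP: vJb; apply; apply: (@inJc c (n - 2) _ 2); [nlia|right; left; nlia].
    * have m0 : yv (c + 2 * j) \in J (c + 2) by apply: (@inJc c 2 _ j.-1); [nlia|left; nlia].
      apply: (NC (2 * j)); last by rewrite -Ej.
      apply: sub => //; apply/eqP => /yvc_inj; nlia.
  + apply: (NC du) => //; rewrite (_ : du.+1 = 2 * j + 2); last nlia.
    exact: sub.
have dv2k : dv = k.*2.
  case: (eqVneq (yv (c + k.*2)) (yv (c + dv))) => [E|ne]; first by move/yvc_inj: E; nlia.
  exfalso; apply: (NC k.*2).
    by apply: sub => //; apply: (@inJc c 2 _ k.-1); [nlia|left; nlia].
  rewrite (@yvc_eq c _ 0); last by nlia.
  by rewrite -du0.
apply/subsetP => w /imsetP [i _ ->].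
change (val i) with (nat_of_ord i).
have ik := ltn_ord i.
case: (posnP i) => [i0|ipos].
  by change (val i) with (nat_of_ord i); rewrite i0 muln0 -du0.
apply: sub; first by apply: (@inJc c 2 _ i.-1); [nlia|left; nlia].
apply/eqP => /yvc_inj; nlia.
Qed.


Lemma caseB c : odd n -> index (F (c + 2)) s < index (F (c + (n - 2))) s ->
  index (F (c + (n - 2))) s <= index (F c) s -> False.
Proof.
move=> od hab hac.
have [l [v [q [lj fH [sH xH] sub [[vJ vJb] [qH qJ]]]]]] := exch hab.
apply: (fin_contra lj hac fH sH xH).
set H := nth set0 s l in fH sH xH sub qH *.
have nk : n = k.*2.+1.
  have := odd_double_half n; rewrite od /k; nlia.
have k3 : 3 <= k by case: n_ne => /eqP ? /eqP ?; nlia.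
case/imsetP: vJ => iv _ Ev.
case: (yv_norm c (c + (n - 2) + 2 * val iv)) => dv dvn Ev'.
rewrite Ev' in Ev; clear Ev'; subst v.
case: (yv_norm c q) => du dun Eq; rewrite Eq in qH qJ.
have NC d : yv (c + d) \in H -> yv (c + d.+1) \in H -> False by apply: nc.
have du2 : du = k.*2 - 2.
  have [j [Ej|Ej]] : exists j, du = 2 * j \/ du = (2 * j).+1 by exists du./2; nlia.
  - case: (ltnP j k.-1) => jk.
      by move/negP: qJ; case; apply: (@inJc c (n - 2) du j.+1); [nlia|right; left; nlia].
    case: (eqVneq j k.-1) => [E|jk1]; first by nlia.
    have jkk : j = k by nlia.
    exfalso.
    case: (eqVneq (yv (c + (k.*2 - 1))) (yv (c + dv))) => [E|ne].
    + have ne0 : yv (c + 0) != yv (c + dv).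
        by rewrite -E; apply/eqP => /yvc_inj; nlia.
      apply: (NC du) => //.
      rewrite (@yvc_eq c _ 0); last by nlia.
      by apply: sub => //; apply: (@inJc c (n - 2) _ 1); [nlia|right; left; nlia].
    + apply: (NC (k.*2 - 1)); last by rewrite (_ : (k.*2 - 1).+1 = du) //; nlia.
      by apply: sub => //; apply: (@inJc c (n - 2) _ 0); [nlia|left; nlia].
  - exfalso.
    case: (ltnP j (k - 2)) => jk.
    + have m1 : yv (c + 2 * j) \in J (c + (n - 2)).
        by apply: (@inJc c (n - 2) _ j.+1); [nlia|right; left; nlia].
      have m2 : yv (c + (2 * j + 2)) \in J (c + (n - 2)).
        by apply: (@inJc c (n - 2) _ j.+2); [nlia|right; left; nlia].
      case: (eqVneq (yv (c + 2 * j)) (yv (c + dv))) => [E|ne].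
      * have ne2 : yv (c + (2 * j + 2)) != yv (c + dv).
          by rewrite -E; apply/eqP => /yvc_inj; nlia.
        apply: (NC du) => //; rewrite (_ : du.+1 = 2 * j + 2); last by nlia.
        exact: sub.
      * by apply: (NC (2 * j)); [exact: sub | rewrite -Ej].
    + case: (eqVneq j (k - 2)) => [jk2|jk2].
      * have m1 : yv (c + (k.*2 - 4)) \in J (c + (n - 2)).
          by apply: (@inJc c (n - 2) _ k.-1); [nlia|right; left; nlia].
        have m2 : yv (c + (k.*2 - 4)) \in J (c + 2).
          by apply: (@inJc c 2 _ (k - 3)); [nlia|left; nlia].
        have ne : yv (c + (k.*2 - 4)) != yv (c + dv).
          by apply: contra vJb => /eqP <-.
        apply: (NC (k.*2 - 4)); first exact: sub.
        by rewrite (_ : (k.*2 - 4).+1 = du) //; nlia.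
      * move/negP: qJ; apply; apply: (@inJc c (n - 2) _ 0); [nlia|left; nlia].
have dvv : dv = k.*2 - 1.
  case: (eqVneq (yv (c + (k.*2 - 1))) (yv (c + dv))) => [E|ne]; first by move/yvc_inj: E; nlia.
  exfalso; apply: (NC du) => //; rewrite (_ : du.+1 = k.*2 - 1); last by nlia.
  by apply: sub => //; apply: (@inJc c (n - 2) _ 0); [nlia|left; nlia].
apply/subsetP => w /imsetP [i _ ->].
change (val i) with (nat_of_ord i).
have ik := ltn_ord i.
case: (eqVneq (nat_of_ord i) k.-1) => [ik1|ik1].
  by rewrite (_ : 2 * i = du) //; nlia.
apply: sub; first by apply: (@inJc c (n - 2) _ i.+1); [nlia|right; left; nlia].
apply/eqP => /yvc_inj; nlia.
Qed.


Lemma yvF a x : (yv x \in F a) = (yv x \in J a).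
Proof. by rewrite /F !in_setU (negbTE (yv_sig x)) (negbTE (yv_Xs x)). Qed.

Lemma idx_neq a b x : yv x \in J a -> yv x \notin J b -> index (F a) s != index (F b) s.
Proof.
move=> h1 h2; apply/eqP => E.
have : F a = F b by rewrite -(nth_index set0 (F_in a)) E nth_index // F_in.
by move=> EF; move: h1; rewrite -yvF EF yvF (negbTE h2).
Qed.

Lemma contra_all : False.
Proof.
case: (boolP (odd n)) => od; last first.
  have nk : n = k.*2.
    have := odd_double_half n; rewrite (negbTE od) /k; nlia.
  have ne : index (F 1) s != index (F 0) s.
    apply: (@idx_neq 1 0 (0 + 1)).
      by apply: (@inJc 0 1 1 0); [nlia|left; nlia].
    apply/negP => /(@outJc 0 0 1) [|| i ik]; [nlia|nlia|].
    case; nlia.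
  case: (ltngtP (index (F 0) s) (index (F 1) s)) => h.
  - exact: (even_contra od h).
  - exact: (even_contra od h).
  - by rewrite h eqxx in ne.
have nk : n = k.*2.+1.
  have := odd_double_half n; rewrite od /k; nlia.
have k3 : 3 <= k by case: n_ne => /eqP ? /eqP ?; nlia.
pose c0 := Ordinal n_gt0.
case: (@arg_maxnP _ c0 predT (fun c : 'I_n => index (F c) s) isT) => c _ cmax.
have le p : index (F (c + p)) s <= index (F c) s.
  rewrite -F_mod; exact: (cmax (Ordinal (ltn_pmod (c + p) n_gt0))).
have c2 : index (F (c + 2)) s < index (F c) s.
  rewrite ltn_neqAle le andbT; rewrite -{2}(addn0 c).
  apply: (@idx_neq _ _ (c + (k.*2))).
    by apply: (@inJc c 2 _ k.-1); [nlia|left; nlia].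
  apply/negP => /(@outJc c 0 (k.*2)) [|| i ik]; [nlia|nlia|].
  case; nlia.
have cm : index (F (c + (n - 2))) s < index (F c) s.
  rewrite ltn_neqAle le andbT; rewrite -{2}(addn0 c).
  apply: (@idx_neq _ _ (c + (n - 2))).
    by apply: (@inJc c (n - 2) _ 0); [nlia|left; nlia].
  apply/negP => /(@outJc c 0 (n - 2)) [|| i ik]; [nlia|nlia|].
  case; nlia.
have ne : index (F (c + 2)) s != index (F (c + (n - 2))) s.
  apply: (@idx_neq _ _ (c + (k.*2))).
    by apply: (@inJc c 2 _ k.-1); [nlia|left; nlia].
  apply/negP => /(@outJc c (n - 2) (k.*2)) [|| i ik]; [nlia|nlia|].
  case; nlia.
case: (ltngtP (index (F (c + 2)) s) (index (F (c + (n - 2))) s)) => h.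
- exact: (caseB od h (ltnW cm)).
- exact: (caseA od h (ltnW c2)).
- by rewrite h eqxx in ne.
Qed.

End Main.

Theorem corollary4p5 (T : finType) (e : rel T)
  (e_sym : symmetric e) (e_irr : irreflexive e)
  (S : {set T}) (t : nat) (t_ge3 : 3 <= t)
  (n : nat) (n_ge3 : 3 <= n) (n_ne : n != 3 /\ n != 5)
  (t_gt : (n.+1)./2 < t)
  (iso : induced_iso_Gnt e S n t)
  (m : T -> nat) (m_ge : forall v, v \in S -> t <= (m v).+1) :
  ~ shellable (CF_face (Cl_adj e S m) t).
Proof.
move=> [s [su smem ssh]].
case: iso => f [finj fimg fadj].
exact: (contra_all t_ge3 n_ge3 m_ge finj fimg fadj t_gt su smem ssh n_ne).
Qed.
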